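(* Let $A$ be a finite set, $h\ge0$, and let $P$ be a probability measure on $(A^{\mathbb{Z}},\mathfrak{A}^{\mathbb{Z}})$ satisfying condition (B* ) with respect to $h$. Then for every $\varepsilon>0$ there exist subsets $\overline{C}_\varepsilon^{(n)}\subseteq A^{(n)}$, $n\in\mathbb{N}$, and a number $\overline{N}(\varepsilon)$ such that properties (1)–(4) of condition (B* ) hold for $\{\overline{C}_\varepsilon^{(n)}\}$ and $\overline N(\varepsilon)$, and moreover the full asymptotic equipartition property holds: $P^{(n)}(\mathbf{x})\in(e^{-n(h+\varepsilon)},e^{-n(h-\varepsilon)})$ for all $n\ge\overline{N}(\varepsilon)$ and all $\mathbf{x}\in\overline{C}_\varepsilon^{(n)}$.
   Context: $\mathfrak{A}^{\mathbb{Z}}$ is the $\sigma$-field on $A^{\mathbb{Z}}$ generated by cylinder sets. For $n\ge 1$, $A^{(n)}:=\prod_{i=1}^n A$ and $P^{(n)}$ denotes the marginal of $P$ on the coordinates $1,\dots,n$. For $\mathbf{x}=(x_i)_{i=1}^n$ let $\mathbf{x}_\flat:=(x_i)_{i=1}^{n-1}$, and for $C\subseteq A^{(n+1)}$ let $C_\flat:=\{\mathbf{x}_\flat:\mathbf{x}\in C\}$. Condition (B* ) w.r.t. $h$: for every $\varepsilon>0$ there exist subsets $C_\varepsilon^{(n)}\subseteq A^{(n)}$, $n\in\mathbb{N}$, and a number $N(\varepsilon)$ such that (1) $C_\varepsilon^{(n)}=(C_\varepsilon^{(n+1)})_\flat$ for all $n\ge1$; (2) $\#C_\varepsilon^{(n)}\in(e^{n(h-\varepsilon)},e^{n(h+\varepsilon)})$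 for $n\ge N(\varepsilon)$; (3) $P^{(n)}(\mathbf{x})<e^{-n(h-\varepsilon)}$ for all $n\ge N(\varepsilon)$ and all $\mathbf{x}\in C_\varepsilon^{(n)}$; (4) $P^{(n)}(C_\varepsilon^{(n)})>1-\varepsilon$ for all $n\ge1$. *)

(* Defs.v *)
From HB Require Import structures.
From mathcomp Require Import all_boot all_order all_algebra.
From mathcomp Require Import all_classical all_reals all_analysis.
Set Implicit Arguments. Unset Strict Implicit. Unset Printing Implicit Defensive.
Import Order.TTheory GRing.Theory Num.Theory.
Local Open Scope ring_scope.
Local Open Scope classical_set_scope.

(* The sequence space A^Z, for a finite alphabet A.  The point [a0] is only
   used to equip the type with the (pointedType) structure required by the
   measure-theory library; A is nonempty anyway. *)
Definition Aseq (A : finType) (a0 : A) := int -> A.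
HB.instance Definition _ (A : finType) (a0 : A) := Choice.on (Aseq a0).
HB.instance Definition _ (A : finType) (a0 : A) :=
  isPointed.Build (Aseq a0) (fun _ => a0).

Definition window (A : finType) (m : int) (n : nat) (w : int -> A)
  : n.-tuple A := [tuple w (m + (i.+1)%:Z)%R | i < n].

Definition cylinders (A : finType) (a0 : A) : set (set (Aseq a0)) :=
  [set S | exists (m : int) (n : nat) (B : {set n.-tuple A}),
           S = [set w : Aseq a0 | window m n w \in B]].

Definition seqSpace (A : finType) (a0 : A) := g_sigma_algebraType (@cylinders A a0).

Definition flat (A : finType) (n : nat) (x : n.+1.-tuple A) : n.-tuple A :=
  [tuple tnth x (widen_ord (leqnSn n) i) | i < n].

Definition flatset (A : finType) (n : nat) (C : {set n.+1.-tuple A})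
  : {set n.-tuple A} := [set flat x | x in C].

Section Marginal.
Context (R : realType) (A : finType) (a0 : A)
        (P : probability (seqSpace a0) R).
Definition marg_set (n : nat) (C : {set n.-tuple A}) : \bar R :=
  P [set w : seqSpace a0 | window 0 n w \in C].
Definition marg (n : nat) (x : n.-tuple A) : \bar R :=
  P [set w : seqSpace a0 | window 0 n w = x].

Definition B_props (h eps : R) (C : forall n : nat, {set n.-tuple A}) (N : nat)
  : Prop :=
  [/\ (forall n : nat, (1 <= n)%N -> C n = flatset (C n.+1)),
      (forall n : nat, (N <= n)%N ->
         expR (n%:R * (h - eps)) < #|C n|%:R < expR (n%:R * (h + eps))),
      (forall n : nat, (N <= n)%N -> forall x, x \in C n ->
         (marg x < (expR (- (n%:R * (h - eps))))%:E)%E) &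
      (forall n : nat, (1 <= n)%N -> ((1 - eps)%:E < marg_set (C n))%E)].

Definition condBstar (h : R) : Prop :=
  forall eps : R, 0 < eps ->
    exists (C : forall n : nat, {set n.-tuple A}) (N : nat), B_props h eps C N.
End Marginal.

(* Main.v *)
Require Import Defs.
From HB Require Import structures.
From mathcomp Require Import all_boot all_order all_algebra.
From mathcomp Require Import all_classical all_reals all_analysis.
From mathcomp Require Import ring lra.
Import Order.TTheory GRing.Theory Num.Theory.
Local Open Scope ring_scope.
Set Implicit Arguments. Unset Strict Implicit.

Section Comb.
Context (A : finType) (a0 : A).

Definition pre (k m : nat) (y : m.-tuple A) : k.-tuple A :=
  [tuple nth a0 y i | i < k].

Lemma nth_pre k m (y : m.-tuple A) i : (i < k)%N ->
  nth a0 (pre k y) i = nth a0 y i.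
Proof.
move=> ik; by rewrite /pre -[i]/(nat_of_ord (Ordinal ik)) nth_mktuple.
Qed.

Lemma pre_pre k n m (y : m.-tuple A) : (k <= n)%N -> pre k (pre n y) = pre k y.
Proof.
move=> kn; apply: eq_from_tnth => i; rewrite !tnth_mktuple nth_pre //.
exact: leq_trans (ltn_ord i) kn.
Qed.

Lemma pre_id m (y : m.-tuple A) : pre m y = y.
Proof. by apply: eq_from_tnth => i; rewrite tnth_mktuple (tnth_nth a0). Qed.

Lemma flat_pre n (x : n.+1.-tuple A) : flat x = pre n x.
Proof. by apply: eq_from_tnth => i; rewrite !tnth_mktuple (tnth_nth a0). Qed.

Lemma window_pre k m (w : int -> A) : (k <= m)%N ->
  window 0 k w = pre k (window 0 m w).
Proof.
move=> km; apply: eq_from_tnth => i; rewrite tnth_mktuple /window.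
have im : (i < m)%N := leq_trans (ltn_ord i) km.
by rewrite tnth_mktuple -/(nat_of_ord (Ordinal im)) nth_mktuple.
Qed.

Lemma consist (C : forall n : nat, {set n.-tuple A}) :
  (forall n : nat, (1 <= n)%N -> C n = flatset (C n.+1)) ->
  forall k m (y : m.-tuple A), (1 <= k)%N -> (k <= m)%N -> y \in C m -> pre k y \in C k.
Proof.
move=> hC k m; elim: m => [|m IH] y k1 km yC.
  by move: (leq_trans k1 km).
case: (ltngtP k m.+1) km => // [km _|-> _]; last by rewrite pre_id.
have := IH (pre m y) k1 km.
rewrite pre_pre //; apply.
rewrite -flat_pre hC; last exact: leq_trans k1 km.
by apply/imsetP; exists y.
Qed.

End Comb.
Set Implicit Arguments. Unset Strict Implicit.

Section Meas.
Context (R : realType) (A : finType) (a0 : A) (P : probability (seqSpace a0) R).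
Local Open Scope classical_set_scope.
Local Open Scope ereal_scope.

Definition cyl n (S : {set n.-tuple A}) : set (seqSpace a0) :=
  [set w | window 0 n w \in S].

Lemma cylM n (S : {set n.-tuple A}) : measurable (cyl S).
Proof. by apply: sub_gen_smallest; exists 0%R, n, S. Qed.

Lemma ptM n (x : n.-tuple A) : measurable [set w : seqSpace a0 | window 0 n w = x].
Proof.
have -> : [set w : seqSpace a0 | window 0 n w = x] = cyl [set x].
  by apply/seteqP; split => w /=; rewrite /cyl /= inE => /eqP.
exact: cylM.
Qed.

Lemma in_bigU (I : eqType) (s : seq I) (F : I -> set (seqSpace a0)) w :
  (exists2 i, i \in s & F i w) -> (\big[setU/set0]_(i <- s) F i) w.
Proof.
elim: s => [|j s IH]; first by case=> i.
case=> i; rewrite big_cons inE => /orP[/eqP-> Fw|si Fw]; first by left.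
by right; apply: IH; exists i.
Qed.

Lemma bigU_le (I : Type) (s : seq I) (F : I -> set (seqSpace a0)) :
  (forall i, measurable (F i)) ->
  P (\big[setU/set0]_(i <- s) F i) <= \sum_(i <- s) P (F i).
Proof.
move=> mF; elim: s => [|j s IH]; first by rewrite !big_nil measure0.
rewrite !big_cons; apply: le_trans (measureU2 _ (mF j) _) _.
  exact: bigsetU_measurable.
exact: leeD.
Qed.

Lemma cyl_le n (S : {set n.-tuple A}) (c : R) :
  (forall x, x \in S -> marg P x <= c%:E) ->
  marg_set P S <= (#|S|%:R * c)%:E.
Proof.
move=> hS.
have sub : cyl S `<=` \big[setU/set0]_(x <- enum S) [set w : seqSpace a0 | window 0 n w = x].
  by move=> w Sw; apply: in_bigU; exists (window 0 n w); rewrite ?mem_enum.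
apply: le_trans (le_measure _ _ _ sub) _; rewrite ?inE.
- exact: cylM.
- by apply: bigsetU_measurable => x _; exact: ptM.
apply: le_trans (bigU_le _ (@ptM n)) _.
rewrite big_enum /=.
apply: le_trans (lee_sum (g := fun=> c%:E) _ _) _; first by move=> x; apply: hS.
by rewrite sumEFin sumr_const mulr_natl.
Qed.

End Meas.

Unset Implicit Arguments. Set Strict Implicit.


Section Stab.
Context (A : finType) (a0 : A) (E : forall m : nat, {set m.-tuple A}).
Context (hE : forall m, (1 <= m)%N -> forall y : m.+1.-tuple A,
  y \in E m.+1 -> pre a0 m y \in E m).

Definition FF m n (x : n.-tuple A) := exists2 y : m.-tuple A, y \in E m & pre a0 n y = x.

Definition Cb n : {set n.-tuple A} :=
  [set x | `[< forall m, (n <= m)%N -> (1 <= m)%N -> FF m n x >]].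

Lemma FF_mono n m m' (x : n.-tuple A) : (n <= m)%N -> (1 <= m)%N -> (m <= m')%N ->
  FF m' n x -> FF m n x.
Proof.
move=> nm m1 /subnK <-; elim: (m' - m)%N => [|j IH]; first by rewrite add0n.
move=> [y yE yx]; apply: IH; exists (pre a0 (j + m) y).
  by apply: (hE (j + m)) => //; rewrite addnC ltn_addr.
by rewrite pre_pre // (leq_trans nm) // leq_addl.
Qed.

Lemma stab n : exists M, [/\ (n <= M)%N, (1 <= M)%N &
  forall x, FF M n x -> x \in Cb n].
Proof.
have : forall x : n.-tuple A, exists m : nat,
    x \in Cb n \/ [/\ (n <= m)%N, (1 <= m)%N & ~ FF m n x].
  move=> x; case: (boolP (x \in Cb n)) => [xC|]; first by exists 0%N; left.
  rewrite inE => /asboolPn /existsNP [m /not_implyP [nm /not_implyP [m1 nF]]].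
  by exists m; right.
move=> /choice [f hf].
exists (maxn (maxn n 1) (\max_(x : n.-tuple A) f x)); split.
- by rewrite !leq_max leqnn.
- by rewrite !leq_max leqnn orbT.
move=> x Fx; case: (hf x) => // -[nm m1 nF]; exfalso; apply: nF.
apply: FF_mono Fx => //.
by rewrite leq_max (leq_bigmax x) orbT.
Qed.

Lemma Cb_FF n (x : n.-tuple A) : (1 <= n)%N -> x \in Cb n -> FF n n x.
Proof. by move=> n1; rewrite inE => /asboolP; apply. Qed.

Lemma FF_Cb n M (x : n.-tuple A) : (1 <= M)%N -> (n <= M)%N -> 
  (forall x, FF M n x -> x \in Cb n) -> x \in Cb n -> FF M n x.
Proof. by move=> M1 nM _; rewrite inE => /asboolP; apply. Qed.

Lemma Cb_flat n : (1 <= n)%N -> Cb n = flatset (Cb n.+1).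
Proof.
move=> n1; apply/setP => x; apply/idP/idP.
- move=> xC; have [M [nM M1 HM]] := stab n.+1.
  have [y yE <-] : FF M n x.
    by move: xC; rewrite inE => /asboolP; apply => //; exact: ltnW.
  apply/imsetP; exists (pre a0 n.+1 y); first by apply: HM; exists y.
  by rewrite (flat_pre a0) pre_pre.
- case/imsetP => x' x'C ->; rewrite inE; apply/asboolP => m nm m1.
  move: x'C; rewrite inE => /asboolP /(_ (maxn m n.+1)).
  rewrite !leq_max ltnSn orbT m1 /= => /(_ isT isT) [y yE <-].
  apply: (@FF_mono n m (maxn m n.+1)) => //; first by rewrite leq_max leqnn.
  by exists y; rewrite // (flat_pre a0) pre_pre.
Qed.

End Stab.

Section Real.
Context (R : realType).

Lemma geom_eq (r : R) Nb j :
  (\sum_(Nb <= k < Nb + j) r ^+ k) * (1 - r) = r ^+ Nb - r ^+ (Nb + j).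
Proof.
elim: j => [|j IH]; first by rewrite addn0 big_geq // mul0r subrr.
rewrite addnS big_nat_recr /=; last exact: leq_addr.
by rewrite mulrDl IH exprS; ring.
Qed.

Lemma geom_le (r : R) Nb M : 0 <= r < 1 ->
  \sum_(Nb <= k < M) r ^+ k <= r ^+ Nb / (1 - r).
Proof.
case/andP=> r0 r1; have r1' : 0 < 1 - r by rewrite subr_gt0.
case: (leqP M Nb) => [MN|/ltnW /subnKC <-].
  by rewrite big_geq // divr_ge0 ?exprn_ge0 // ltW.
rewrite ler_pdivlMr // geom_eq lerBlDr lerDl.
exact: exprn_ge0.
Qed.

Lemma expR_bound (c : R) : 0 < c -> exists K : nat, forall x : R,
  K%:R <= x -> expR (- x) <= c /\ 1 <= c * x.
Proof.
move=> c0; exists (Num.Def.archi_bound (c^-1)).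
move=> x Kx; have ci : 0 <= c^-1 by rewrite invr_ge0 ltW.
have := archi_boundP ci.
move=> /lt_le_trans /(_ Kx) cx.
have x0 : 0 < x by apply: le_lt_trans cx.
split.
  rewrite expRN -[c]invrK lef_pV2 ?posrE ?expR_gt0 ?invr_gt0 //.
  apply: le_trans (ltW cx) _; apply: le_trans (expR_ge1Dx x).
  by rewrite lerDr.
by rewrite -ler_pdivrMl // mulr1 ltW.
Qed.

End Real.

Section Real2.
Context (R : realType).
Lemma expR_bound2 (c d : R) : 0 < c -> 0 < d -> exists Nb : nat, forall n : nat,
  (Nb <= n)%N -> expR (- (n%:R * d)) <= c /\ 1 <= n%:R * d.
Proof.
move=> c0 d0.
have c'0 : 0 < Num.min c 1 by rewrite lt_min c0 ltr01.
have [K HK] := @expR_bound R _ c'0.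
have Kd : 0 <= K%:R / d by rewrite divr_ge0 // ltW.
exists (Num.Def.archi_bound (K%:R / d)) => n Nn.
have : K%:R / d < n%:R.
  apply: lt_le_trans (archi_boundP Kd) _; by rewrite ler_nat.
rewrite ltr_pdivrMr // => /ltW /HK [e1 e2]; split.
  by apply: le_trans e1 _; rewrite ge_min lexx.
apply: le_trans e2 _; apply: ler_piMl; last by rewrite ge_min lexx orbT.
by rewrite mulr_ge0 // ltW.
Qed.
End Real2.

Theorem mainTheorem2 (R : realType) (A : finType) (a0 : A)
  (P : probability (seqSpace a0) R) (h : R) :
  0 <= h -> condBstar P h ->
  forall eps : R, 0 < eps ->
    exists (C : forall n : nat, {set n.-tuple A}) (N : nat),
      B_props P h eps C N /\
      (forall n : nat, (N <= n)%N -> forall x, x \in C n ->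
         ((expR (- (n%:R * (h + eps))))%:E < marg P x)%E /\
         (marg P x < (expR (- (n%:R * (h - eps))))%:E)%E).
Proof.
move=> h0 hB eps eps0.
pose eta := Num.min eps (2^-1).
have eta0 : 0 < eta by rewrite lt_min eps0 invr_gt0 ltr0n.
have etae : eta <= eps by rewrite ge_min lexx.
have eta2 : eta <= 2^-1 by rewrite ge_min lexx orbT.
pose d := eta / 2.
have d0 : 0 < d by rewrite divr_gt0.
have [C [N0 [hC1 hC2 hC3 hC4]]] := hB d d0.
pose r := expR (- d).
have r01 : 0 <= r < 1 by rewrite expR_ge0 expR_lt1 oppr_lt0 d0.
have r1 : 0 < 1 - r by rewrite subr_gt0; case/andP: r01.
have [Nb' HNb'] := @expR_bound2 R (d * (1 - r)) d (mulr_gt0 d0 r1) d0.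
pose Nb := maxn (maxn N0 Nb') 1.
have NbN0 : (N0 <= Nb)%N by rewrite !leq_max leqnn.
have Nb1 : (1 <= Nb)%N by rewrite !leq_max leqnn orbT.
have HNb : forall n, (Nb <= n)%N -> expR (- (n%:R * d)) <= d * (1 - r) /\ 1 <= n%:R * d.
  by move=> n Nn; apply: HNb'; apply: leq_trans Nn; rewrite !leq_max leqnn orbT.
pose lowb k (x : k.-tuple A) := ((expR (- (k%:R * (h + eps))))%:E < marg P x)%E.
pose E := fun m => [set y in C m | `[< forall k, (Nb <= k <= m)%N -> lowb k (pre a0 k y) >]].
have hE : forall m, (1 <= m)%N -> forall y : m.+1.-tuple A,
    y \in E m.+1 -> pre a0 m y \in E m.
  move=> m m1 y; rewrite !inE => /andP[yC /asboolP yl]; apply/andP; split.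
    by apply: consist yC.
  apply/asboolP => k /andP[Nk km]; rewrite pre_pre //; apply: yl.
  by rewrite Nk (leq_trans km).
have CbC : forall n x, (1 <= n)%N -> x \in Cb A a0 E n -> x \in C n.
  move=> n x n1 /(@Cb_FF A a0 E n x n1) [y]; rewrite inE => /andP[yC _] <-.
  by rewrite pre_id.
have fin : forall (S : set (seqSpace a0)), measurable S -> exists p : R, P S = p%:E.
  move=> S mS; exists (fine (P S)); rewrite fineK //.
  exact: fin_num_measure.
have H4 : forall n, (1 <= n)%N -> ((1 - eta)%:E < marg_set P (Cb A a0 E n))%E.
  move=> n n1; have [M [nM M1 HM]] := @stab A a0 E hE n.
  have sub1 : (@cyl A a0 _ (E M) `<=` @cyl A a0 _ (Cb A a0 E n))%classic.
    move=> w; rewrite /cyl /= => wE; apply: HM.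
    by exists (window 0 M w); rewrite // -window_pre.
  pose B k := [set x in C k | ~~ lowb k x].
  have sub2 : (@cyl A a0 _ (C M) `<=` (@cyl A a0 _ (E M) `|`
      \big[setU/set0]_(k <- index_iota Nb M.+1) @cyl A a0 _ (B k)))%classic.
    move=> w; rewrite /cyl /= => wC.
    case: (boolP (window 0 M w \in E M)) => [wE|wnE]; first by left.
    right; move: wnE; rewrite /E inE wC /= => /asboolPn /existsNP [k /not_implyP [/andP [Nk kM] nl]].
    apply: in_bigU; exists k; first by rewrite mem_index_iota Nk ltnS.
    rewrite /B /= inE (window_pre a0 w kM) (consist a0 hC1) ?(leq_trans Nb1 Nk) //=.
    by apply/negP.
  have bk : forall k, (Nb <= k)%N -> (marg_set P (B k) <= (r ^+ k)%:E)%E.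
    move=> k Nk; apply: le_trans (@cyl_le R A a0 P k (B k) (expR (- (k%:R * (h + eps)))) _) _.
      by move=> x; rewrite /B inE => /andP[_ /negP nl]; rewrite leNgt; apply/negP.
    rewrite lee_fin.
    have Ck : (#|B k| <= #|C k|)%N.
      apply: subset_leq_card; by apply/fintype.subsetP => x; rewrite inE => /andP[].
    have /andP[_ hc] := hC2 k (leq_trans NbN0 Nk).
    apply: (@le_trans _ _ (expR (k%:R*(h+d)) * expR (-(k%:R*(h+eps))))).
      apply: ler_wpM2r; first exact: expR_ge0.
      by apply: le_trans (ltW hc); rewrite ler_nat.
    rewrite -expRD /r -expRM_natl ler_expR.
    have dd : d + d <= eps by rewrite /d; lra.
    have k0 : 0 <= k%:R :> R by [].
    nra.
  have hsum : (\sum_(k <- index_iota Nb M.+1) marg_set P (B k) <= d%:E)%E.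
    apply: (@le_trans _ _ (\sum_(k <- index_iota Nb M.+1) (r^+k)%:E)%E).
      rewrite !big_seq; apply: lee_sum => k; rewrite mem_index_iota => /andP[Nk _].
      exact: bk.
    rewrite sumEFin lee_fin; apply: le_trans (@geom_le R r Nb M.+1 r01) _.
    rewrite ler_pdivrMr // /r -expRM_natl mulrN.
    exact: (HNb Nb (leqnn _)).1.
  have le1 : (P (@cyl A a0 _ (C M)) <= P (@cyl A a0 _ (Cb A a0 E n)) +
       \sum_(k <- index_iota Nb M.+1) marg_set P (B k))%E.
    have mU : measurable (\big[setU/set0]_(k <- index_iota Nb M.+1) @cyl A a0 _ (B k)).
      by apply: bigsetU_measurable => k _; exact: cylM.
    apply: le_trans (le_measure _ _ _ sub2) _; rewrite ?inE.
    - exact: cylM.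
    - by apply: measurableU => //; exact: cylM.
    apply: le_trans (measureU2 _ _ _) _ => //; first exact: cylM.
    apply: leeD; last exact: bigU_le (fun k => cylM _).
    by apply: le_measure sub1; rewrite inE; exact: cylM.
  have := hC4 M M1; rewrite /marg_set.
  have [p hp] := fin _ (cylM (Cb A a0 E n)).
  have [q hq] := fin _ (cylM (C M)).
  move: le1; rewrite /marg_set /cyl in hp hq *.
  rewrite hp hq => le1 lt1.
  have := le_trans le1 (leeD (lexx _) hsum).
  rewrite -EFinD lee_fin => le2; move: lt1; rewrite lte_fin => lt1.
  rewrite lte_fin; rewrite /d in le2 lt1; lra.
have dd : d + d <= eps by rewrite /d; lra.
have H3 : forall n, (Nb <= n)%N -> forall x, x \in Cb A a0 E n ->
    (marg P x < (expR (- (n%:R * (h - eps))))%:E)%E.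
  move=> n Nn x xC; have n1 := leq_trans Nb1 Nn.
  apply: lt_le_trans (hC3 n (leq_trans NbN0 Nn) x (CbC n x n1 xC)) _.
  rewrite lee_fin ler_expR.
  have n0 : 0 <= n%:R :> R by [].
  nra.
exists (Cb A a0 E), Nb; split; first split.
- by move=> n n1; apply: (@Cb_flat A a0 E hE n n1).
- move=> n Nn; have n1 := leq_trans Nb1 Nn; have N0n := leq_trans NbN0 Nn.
  have /andP[_ hc] := hC2 n N0n.
  have [ed e1] := HNb n Nn.
  have n0 : 0 <= n%:R :> R by [].
  apply/andP; split; last first.
    apply: (@le_lt_trans _ _ #|C n|%:R).
      rewrite ler_nat; apply: subset_leq_card; apply/fintype.subsetP => x.
      exact: CbC.
    apply: lt_le_trans hc _; rewrite ler_expR; nra.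
  have := H4 n n1.
  have le : (marg_set P (Cb A a0 E n) <= (#|Cb A a0 E n|%:R * expR (- (n%:R * (h - d))))%:E)%E.
    apply: cyl_le => x xC; apply: ltW; apply: hC3 => //; exact: CbC.
  move=> lt; have := lt_le_trans lt le; rewrite lte_fin => H.
  set c := #|Cb A a0 E n|%:R in H *.
  set X := expR (n%:R * (h - eps)). set Y := expR (n%:R * (h - d)).
  set Z := expR (- (n%:R * (h - d))) in H.
  have XY : X * 2 <= Y.
    rewrite /Y (_ : n%:R * (h - d) = n%:R * (h - eps) + n%:R * (eps - d)); last by ring.
    rewrite expRD ler_wpM2l ?expR_ge0 //; apply: le_trans (expR_ge1Dx _).
    nra.
  have HY : Y * Z = 1 by rewrite /Z expRN mulfV // gt_eqF // expR_gt0.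
  have Y0 : 0 < Y by apply: expR_gt0.
  have h1 : (1 - eta) * Y < c.
    by move: H; rewrite -(ltr_pM2r Y0) -mulrA (mulrC Z) HY mulr1.
  nra.
- exact: H3.
- move=> n n1; apply: le_lt_trans (H4 n n1); rewrite lee_fin; lra.
move=> n Nn x xC; split; last exact: H3.
have n1 := leq_trans Nb1 Nn.
have [y] := @Cb_FF A a0 E n x n1 xC; rewrite /E inE => /andP[_ /asboolP yl] <-.
by apply: yl; rewrite Nn leqnn.
Qed.
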